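(* Let $C>0$ and let $\mathcal{T}$ be a set of $C$-nice $(k,p)$-trees, no two of which are identical. Then $$\mathrm{b}_k(p)^{1/p}\geq\frac{p}{e\cdot C^2}\,|\mathcal{T}|^{1/p}.$$
   Context: A $(k,p)$-tree is a rooted plane tree (children of each node ordered left to right) with exactly $p$ leaves, each at distance exactly $k+1$ from the root. Two $(k,p)$-trees are identical if one is obtained from the other by renaming vertices while preserving the root, adjacency, and the left-to-right order of children of every node. For a rooted tree $T$, $\mathrm{Tran}(T)=\prod_{u\in V(T)}|r_u|!$, where $|r_u|$ is the number of children of $u$; $T$ is $C$-nice if $\mathrm{Tran}(T)\leq C^p$. $\mathrm{b}_k(p)$ is the number of $k$-level partitions $(T_1,\dots,T_k)$ of $[p]$ ($T_1$ a partition of $[p]$ into nonempty parts, $T_i$ a refinement of $T_{i-1}$). *)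

(* Defs.v *)
From mathcomp Require Import all_boot all_order all_algebra.
From mathcomp Require Import all_classical all_reals all_analysis.
Set Implicit Arguments. Unset Strict Implicit. Unset Printing Implicit Defensive.
Import Order.TTheory GRing.Theory Num.Theory.

(* Rooted plane trees up to identity (renaming preserving root, adjacency and
   left-to-right order of children): a node is the ordered list of its
   children's subtrees.  Two trees are "identical" iff they are equal terms. *)
Inductive ptree : Type := Node of seq ptree.

Fixpoint leafdepths (t : ptree) : seq nat :=
  match t with
  | Node cs =>
      if cs is [::] then [:: 0%N]
      else flatten (map (fun c => map S (leafdepths c)) cs)
  end.

Definition is_kp_tree (k p : nat) (t : ptree) : bool :=
  (size (leafdepths t) == p) && all (fun d => d == k.+1) (leafdepths t).

Fixpoint tran (t : ptree) : nat :=
  match t with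
  | Node cs => (size cs)`! * foldr (fun c acc => tran c * acc) 1%N cs
  end.

Definition nice (R : realType) (C : R) (p : nat) (t : ptree) : bool :=
  ((tran t)%:R <= C ^+ p)%R.

Definition pairwise_distinct (s : seq ptree) : Prop :=
  forall i j : nat, (i < size s)%N -> (j < size s)%N ->
    nth (Node [::]) s i = nth (Node [::]) s j -> i = j.

Definition refines (p : nat) (Q P : {set {set 'I_p}}) : bool :=
  [forall B in Q, [exists A in P, B \subset A]].

(* k-level partitions (T_1,...,T_k) of [p] = {0,..,p-1}: each T_i is a partition
   of [p] into nonempty parts (finset's [partition], which excludes set0), and
   T_{i+1} refines T_i.  Levels are indexed by 'I_k (T_1 is index 0). *)
Definition klevel_partition (k p : nat) (f : {ffun 'I_k -> {set {set 'I_p}}}) : bool :=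
  [forall i, finset.partition (f i) [set: 'I_p]] &&
  [forall i : 'I_k, forall j : 'I_k, ((nat_of_ord i).+1 == nat_of_ord j) ==> refines (f j) (f i)].

Definition bk (k p : nat) : nat :=
  #|[set f : {ffun 'I_k -> {set {set 'I_p}}} | @klevel_partition k p f]|.

(* Main.v *)
Require Import Defs.
From HB Require Import structures.
From mathcomp Require Import all_boot all_order all_algebra.
From mathcomp Require Import all_classical all_reals all_analysis.
From mathcomp Require Import zify ring lra.
From mathcomp Require Import fintype finfun finset bigop binomial.
From Stdlib Require Import Lia.
Import Order.TTheory GRing.Theory Num.Theory.
Set Implicit Arguments. Unset Strict Implicit. Unset Printing Implicit Defensive.

Fixpoint pt_enc (t : ptree) : GenTree.tree unit :=
  let: Node cs := t in GenTree.Node 0 (map pt_enc cs).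
Fixpoint pt_dec (g : GenTree.tree unit) : ptree :=
  match g with GenTree.Leaf _ => Node [::] | GenTree.Node _ gs => Node (map pt_dec gs) end.

Inductive Fa (P : ptree -> Prop) : seq ptree -> Prop :=
 | Fa_nil : Fa P [::]
 | Fa_cons c cs : P c -> Fa P cs -> Fa P (c :: cs).

Fixpoint ptree_ind2 (P : ptree -> Prop)
  (H : forall cs, Fa P cs -> P (Node cs)) (t : ptree) : P t :=
  match t with Node cs => H cs
    ((fix g (cs : seq ptree) : Fa P cs :=
       match cs with [::] => Fa_nil P
       | c :: cs' => Fa_cons (ptree_ind2 H c) (g cs') end) cs) end.

Lemma pt_encK : cancel pt_enc pt_dec.
Proof.
elim/ptree_ind2 => cs H /=; congr Node.
elim: cs H => //= c cs IH H; inversion H; subst; rewrite H2 IH //.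
Qed.

HB.instance Definition _ := Countable.copy ptree (can_type pt_encK).

Lemma ptree_indM (P : ptree -> Prop) :
  (forall cs, (forall c, c \in cs -> P c) -> P (Node cs)) -> forall t, P t.
Proof.
move=> H; elim/ptree_ind2 => cs Hf; apply: H.
elim: cs Hf => // c cs IH Hf; inversion Hf; subst => x; rewrite inE => /orP[/eqP->//|].
exact: IH.
Qed.

Definition nleaves t := size (leafdepths t).
Definition dep d t := all (fun x => x == d) (leafdepths t).

Lemma nleaves_gt0 t : 0 < nleaves t.
Proof.
elim/ptree_indM: t => [[|c cs]] IH //=; rewrite /nleaves /=.
rewrite size_cat size_map; have := IH c (mem_head _ _); rewrite /nleaves; lia.
Qed.

Lemma ld_node c cs : leafdepths (Node (c :: cs)) =
  flatten (map (fun c => map S (leafdepths c)) (c :: cs)).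
Proof. by []. Qed.

Lemma nleaves_node cs : cs != [::] -> nleaves (Node cs) = sumn (map nleaves cs).
Proof.
case: cs => // c cs _; rewrite /nleaves ld_node size_flatten /shape -map_comp.
by congr sumn; apply: eq_map => x /=; rewrite size_map.
Qed.

Lemma all_flatten_map (A B : Type) (a : pred B) (f : A -> seq B) l :
  all a (flatten (map f l)) = all (fun x => all a (f x)) l.
Proof. by elim: l => //= x l IH; rewrite all_cat IH. Qed.

Lemma dep_node d cs : dep d.+1 (Node cs) = (cs != [::]) && all (dep d) cs.
Proof.
case: cs => // c cs; rewrite /dep ld_node all_flatten_map.
apply: eq_all => x /=; rewrite all_map; apply: eq_all => y /=; by [].
Qed.

Lemma dep0 t : dep 0 t -> t = Node [::].
Proof.
case: t => [[|c cs]] //; rewrite /dep ld_node /= all_cat all_map => /andP[H _].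
have := nleaves_gt0 c; rewrite /nleaves; case: (leafdepths c) H => //.
Qed.

Lemma tranE cs : tran (Node cs) = (size cs)`! * \prod_(c <- cs) tran c.
Proof.
rewrite /=; congr (_ * _); elim: cs => [|c cs IH] /=; first by rewrite big_nil.
by rewrite big_cons IH.
Qed.

Lemma tran_gt0 t : 0 < tran t.
Proof.
elim/ptree_indM: t => cs IH; rewrite tranE muln_gt0 fact_gt0 /=.
by rewrite big_seq; apply: prodn_cond_gt0 => i; apply: IH.
Qed.

Section KP.
Variable p : nat.
Notation L := {set 'I_p}.
Notation LL := {set {set 'I_p}}.

Definition KPs k (S : L) : {set {ffun 'I_k -> LL}} :=
  [set f : {ffun 'I_k -> LL} | [forall i, partition (f i) S] &&
     [forall i : 'I_k, forall j : 'I_k, ((nat_of_ord i).+1 == nat_of_ord j) ==> refines (f j) (f i)]].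

Lemma bkE k : bk k p = #|KPs k setT|.
Proof. by apply: eq_card => f; rewrite !inE. Qed.

Lemma KPs0 S : #|KPs 0 S| = 1.
Proof.
apply/eqP/cards1P; exists [ffun i => set0]; apply/setP => f; rewrite !inE.
apply/idP/eqP => [_|_]; first by apply/ffunP => -[].
by apply/andP; split; apply/forallP => -[].
Qed.

Lemma partition_bigcup (P : LL) (S : L) (Q : L -> LL) :
  partition P S -> (forall B, B \in P -> partition (Q B) B) ->
  partition (\bigcup_(B in P) Q B) S.
Proof.
move=> hP hQ; apply/and3P; split.
- rewrite -(cover_partition hP); apply/eqP/setP => x.
  apply/bigcupP/bigcupP => [[X /bigcupP[B BP XQ] xX]|[B BP xB]].
    exists B => //; rewrite -(cover_partition (hQ B BP)).
    by apply/bigcupP; exists X.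
  move: xB; rewrite -(cover_partition (hQ B BP)) => /bigcupP[X XQ xX].
  by exists X => //; apply/bigcupP; exists B.
- apply/trivIsetP => X Y /bigcupP[B BP XQ] /bigcupP[B' B'P YQ] nXY.
  have [eBB'|nBB'] := eqVneq B B'.
    by subst B'; move/trivIsetP: (partition_trivIset (hQ B BP)); apply.
  have dBB' : [disjoint B & B'].
    by move/trivIsetP: (partition_trivIset hP); apply.
  apply: disjointWl (partitionS (hQ B BP) XQ) _.
  apply: disjointWr (partitionS (hQ B' B'P) YQ) _.
  exact: dBB'.
- apply/bigcupP => -[B BP]; by rewrite (partition0 (hQ B BP)).
Qed.


Section Glue.
Variable k : nat.
Notation H := {ffun L -> {ffun 'I_k -> LL}}.
Definition y0 : {ffun 'I_k -> LL} := [ffun _ => set0].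

Definition glue (x : LL * H) : {ffun 'I_k.+1 -> LL} :=
  [ffun i => if unlift ord0 i is Some j then \bigcup_(B in x.1) x.2 B j else x.1].

Definition Dg (S : L) : {set LL * H} :=
  [set x : LL * H | partition x.1 S && (x.2 \in pfamily y0 x.1 (fun B => KPs k B))].

Lemma foldr_prod (T : Type) (f : T -> nat) l :
  foldr muln 1 (map f l) = \prod_(x <- l) f x.
Proof. by elim: l => [|x l IH] /=; rewrite ?big_nil ?big_cons ?IH. Qed.

Lemma card_Dg S : #|Dg S| = \sum_(P | partition P S) \prod_(B in P) #|KPs k B|.
Proof.
rewrite -sum1_card /Dg.
rewrite (eq_bigl (fun x : LL * H => partition x.1 S && (x.2 \in pfamily y0 x.1 (fun B => KPs k B)))); last first.
  by move=> x; rewrite inE.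
rewrite -(pair_big_dep (fun P => partition P S) (fun P (h : H) => h \in pfamily y0 P (fun B => KPs k B)) (fun _ _ => 1%N)) /=.
apply: eq_bigr => P _; rewrite sum1_card card_pfamily foldr_prod.
by rewrite big_enum.
Qed.

Lemma glue0 x : glue x ord0 = x.1.
Proof. by rewrite ffunE unlift_none. Qed.

Lemma glueS x j : glue x (lift ord0 j) = \bigcup_(B in x.1) x.2 B j.
Proof. by rewrite ffunE liftK. Qed.

Lemma glue_in S x : x \in Dg S -> glue x \in KPs k.+1 S.
Proof.
rewrite !inE => /andP[hP /pfamilyP[_ hfam]].
have hQ j B : B \in x.1 -> partition (x.2 B j) B.
  by move=> BP; move: (hfam B BP); rewrite inE => /andP[/forallP Hf _]; apply: Hf.
apply/andP; split.
  apply/forallP => i; case: (unliftP ord0 i) => [j ->|->].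
    by rewrite glueS; apply: partition_bigcup => // B BP; apply: hQ.
  by rewrite glue0.
apply/forallP => i; apply/forallP => j; apply/implyP => /eqP ij.
case: (unliftP ord0 j) => [j' ej|ej]; last by subst j.
subst j; rewrite glueS; case: (unliftP ord0 i) => [i' ei|ei]; subst i.
- rewrite glueS; apply/forallP => X; apply/implyP => /bigcupP[B BP XQ].
  move: (hfam B BP); rewrite inE => /andP[_ /forallP /(_ i') /forallP /(_ j')].
  move: ij; rewrite /= /bump !leq0n /= !add1n => -[] ij.
  rewrite ij eqxx /= => /forallP /(_ X) /implyP /(_ XQ) /existsP[A /andP[AQ XA]].
  by apply/existsP; exists A; rewrite XA andbT; apply/bigcupP; exists B.
- rewrite glue0; apply/forallP => X; apply/implyP => /bigcupP[B BP XQ].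
  by apply/existsP; exists B; rewrite BP (partitionS (hQ j' B BP) XQ).
Qed.

Lemma glue_inj S : {in Dg S &, injective glue}.
Proof.
move=> [P h] [P' h']; rewrite !inE /= => /andP[hP /pfamilyP[/supportP hs hfam]].
move=> /andP[_ /pfamilyP[/supportP hs' hfam']] e.
have eP : P = P'.
  by move: (congr1 (fun g : {ffun 'I_k.+1 -> LL} => g ord0) e); rewrite !glue0.
subst P'; congr pair; apply/ffunP => B.
have [BP|BnP] := boolP (B \in P); last by rewrite hs ?hs'.
have hQ (g : H) j B' : (forall B, B \in P -> g B \in KPs k B) -> B' \in P -> partition (g B' j) B'.
  by move=> hg BP'; move: (hg B' BP'); rewrite inE => /andP[/forallP Hf _]; apply: Hf.
have key (g : H) j : (forall B, B \in P -> g B \in KPs k B) ->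
    g B j = [set X in \bigcup_(B' in P) g B' j | X \subset B].
  move=> hg; apply/setP => X; rewrite inE; apply/idP/andP => [XQ|[/bigcupP[B' B'P XQ] XB]].
    by split; [apply/bigcupP; exists B | apply: (partitionS (hQ g j B hg BP))].
  have [eB|nB] := eqVneq B' B; first by subst.
  have X0 : X != set0 by apply: (partition_neq0 (hQ g j B' hg B'P)).
  have XB' := partitionS (hQ g j B' hg B'P) XQ.
  have dBB' : [disjoint B' & B].
    by move/trivIsetP: (partition_trivIset hP); apply.
  case/set0Pn: X0 => y yX.
  by move: (disjointFr dBB' (subsetP XB' y yX)); rewrite (subsetP XB y yX).
apply/ffunP => j; rewrite (key h j hfam) (key h' j hfam').
by move: (congr1 (fun g : {ffun 'I_k.+1 -> LL} => g (lift ord0 j)) e); rewrite !glueS /= => ->.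
Qed.

Lemma lemmaC S : \sum_(P | partition P S) \prod_(B in P) #|KPs k B| <= #|KPs k.+1 S|.
Proof.
rewrite -card_Dg -(card_in_imset (@glue_inj S)); apply: subset_leq_card.
by apply/subsetP => g /imsetP[x xD ->]; apply: glue_in.
Qed.
End Glue.
End KP.

Lemma sum_inj_le (I J : finType) (A : pred I) (B : pred J) (h : I -> J)
   (f : I -> nat) (g : J -> nat) : {in A &, injective h} ->
   (forall x, A x -> B (h x) /\ g (h x) = f x) ->
   \sum_(x | A x) f x <= \sum_(y | B y) g y.
Proof.
move=> hinj hAB.
rewrite (eq_bigr (fun x => g (h x))); last by move=> x /hAB[].
rewrite -(big_imset _ hinj) /=.
rewrite [X in _ <= X](bigID (fun y => y \in h @: A)) /=.
apply: leq_trans (leq_addr _ _).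
rewrite [X in _ <= X](eq_bigl (fun y => y \in h @: A)) //.
move=> y; apply/andP/idP => [[]//|yA]; split => //.
by case/imsetP: yA => x xA ->; case: (hAB x xA).
Qed.

Section Fo.
Variable p k : nat.
Notation L := {set 'I_p}.
Notation LL := {set {set 'I_p}}.
Definition Fk (B : L) := #|KPs k B|.

Fixpoint Fo (S : L) (m : nat) : nat :=
  match m with
  | 0 => (S == set0)
  | m'.+1 => \sum_(B : L | (B \subset S) && (B != set0)) Fk B * Fo (S :\: B) m'
  end.

Definition Pm (S : L) m := \sum_(P | partition P S && (#|P| == m)) \prod_(B in P) Fk B.

Lemma Fo_le m S : Fo S m <= m`! * Pm S m.
Proof.
elim: m S => [|m IH] S /=.
  rewrite mul1n; have [->|//] := eqVneq S set0.
  rewrite /Pm (bigD1 set0) /=; last by rewrite partition_set0 cards0 !eqxx.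
  by rewrite big_set0 leq_addr.
apply: (@leq_trans (\sum_(B : L | (B \subset S) && (B != set0)) Fk B * (m`! * Pm (S :\: B) m))).
  by apply: leq_sum => B _; rewrite leq_mul2l IH orbT.
rewrite factS -mulnA.
under eq_bigr do rewrite mulnCA.
rewrite -big_distrr /= mulnCA leq_mul2l; apply/orP; right.
under eq_bigr do rewrite /Pm big_distrr /=.
rewrite pair_big_dep /=.
rewrite /Pm big_distrr /=.
under [X in _ <= X]eq_bigr => P /andP[_ /eqP <-] do rewrite -sum1_card big_distrl /= mul1n.
rewrite pair_big_dep /=.
have BnP (B : L) (P : LL) : B != set0 -> partition P (S :\: B) -> B \notin P.
  move=> B0 hP; apply/negP => BP; have := partitionS hP BP; rewrite subsetD => /andP[_].
  rewrite -setI_eq0 setIid; exact/negP.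
apply: (@sum_inj_le _ _ _ _ (fun x : L * LL => (x.1 |: x.2, x.1))).
  move=> [B P] [B' P'] /and3P[/andP[_ B0] hP _] /and3P[/andP[_ B0'] hP' _] /= [eU eB].
  subst B'; congr pair; move: B0 B0' hP hP' eU => /= B0 _ hP hP' eU.
  by rewrite -(setU1K (BnP _ _ B0 hP)) eU setU1K // BnP.
move=> [B P] /and3P[/andP[BS B0] hP /eqP cP] /=.
have hU : partition (B |: P) S.
  have -> : S = B :|: (S :\: B).
    by apply/setP => x; rewrite !inE; case: (boolP (x \in B)) => //= /(subsetP BS) ->.
  apply: partitionU1 => //; rewrite -setI_eq0; apply/eqP/setP => x; rewrite !inE.
  by case: (x \in B); rewrite ?andbF.
move: B0 hP cP BS => /= B0 hP cP BS.
have BP := BnP _ _ B0 hP.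
split.
  by rewrite hU cardsU1 BP cP setU11 add1n eqxx.
by apply: big_setU1.
Qed.

End Fo.

Local Open Scope ring_scope.

Section Reals.
Variable R : realFieldType.

Lemma sum_sub_uniq (T : eqType) (s s' : seq T) (F : T -> R) :
  uniq s -> uniq s' -> {subset s <= s'} -> (forall x, 0 <= F x) ->
  \sum_(x <- s) F x <= \sum_(x <- s') F x.
Proof.
move=> us us' ss' F0.
rewrite [X in _ <= X](bigID (fun x => x \in s)) /=.
have -> : \sum_(i <- s' | i \in s) F i = \sum_(x <- s) F x.
  rewrite -big_filter; apply: perm_big; apply: uniq_perm => //.
    exact: filter_uniq.
  by move=> x; rewrite mem_filter; apply/andP/idP => [[]//|xs]; split => //; apply: ss'.
by rewrite lerDl sumr_ge0.
Qed.

Lemma prod_bound (A B : eqType) (Y : seq (A * B)) (w : A -> R) (v : B -> R) :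
  uniq Y -> (forall a, 0 <= w a) -> (forall b, 0 <= v b) ->
  \sum_(y <- Y) w y.1 * v y.2 <=
  (\sum_(a <- undup (map fst Y)) w a) * (\sum_(b <- undup (map snd Y)) v b).
Proof.
move=> uY w0 v0.
rewrite big_distrl /=.
under [X in _ <= X]eq_bigr do rewrite big_distrr /=.
rewrite -(big_allpairs (F := fun y : A * B => w y.1 * v y.2)).
apply: sum_sub_uniq => //.
- by apply: allpairs_uniq; rewrite ?undup_uniq // => -[x1 x2] [y1 y2].
- move=> [a b] yY; apply: (allpairs_f pair); rewrite mem_undup.
    by apply/mapP; exists (a, b).
  by apply/mapP; exists (a, b).
- by move=> y; rewrite mulr_ge0.
Qed.


Variable p : nat.
Notation L := {set 'I_p}.

Definition TLk (k : nat) := forall (S : L) (s : seq ptree), uniq s ->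
  (forall t, t \in s -> dep k.+1 t && (nleaves t == #|S|)) ->
  \sum_(t <- s) (#|S|)`!%:R / (tran t)%:R <= (#|KPs k S|)%:R :> R.

Notation lf := (Node [::]).

Lemma cardSD (S B : L) : B \subset S -> #|S :\: B| = (#|S| - #|B|)%N.
Proof. by move=> BS; rewrite cardsD; move/setIidPr: BS => ->. Qed.

Lemma key_split (S : L) (c : ptree) (cs : seq ptree) :
  (nleaves c + sumn (map nleaves cs))%N = #|S| ->
  (#|S|)`!%:R / (\prod_(x <- c :: cs) tran x)%:R =
  \sum_(B : L | (B \subset S) && (B != set0))
     (if #|B| == nleaves c then ((#|B|)`!%:R / (tran c)%:R) *
        ((#|S :\: B|)`!%:R / (\prod_(x <- cs) tran x)%:R) else 0) :> R.
Proof.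
move=> hn; set a := nleaves c; set n := #|S|.
have a0 : (0 < a)%N := nleaves_gt0 c.
have an : (a <= n)%N by rewrite /n -hn leq_addr.
rewrite -big_mkcondr /=.
rewrite (eq_bigr (fun _ => (a`!%:R / (tran c)%:R) * ((n - a)`!%:R / (\prod_(x <- cs) tran x)%:R))); last first.
  by move=> B /andP[/andP[BS _] /eqP aB]; rewrite cardSD // aB.
rewrite sumr_const.
have -> : #|[pred B : L | (B \subset S) && (B != set0) && (#|B| == a)]| = 'C(n, a).
  rewrite -cards_draws; apply: eq_card => B; rewrite !inE /=.
  have c0 : #|(set0 : L)| = 0%N by rewrite cards0.
  have [->|_] := eqVneq B set0; last by rewrite andbT.
  by rewrite c0 eq_sym (negbTE (lt0n_neq0 a0)) !andbF.
have tc0 : (tran c)%:R != 0 :> R by rewrite pnatr_eq0 -lt0n tran_gt0.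
have tp0 : (\prod_(x <- cs) tran x)%:R != 0 :> R.
  by rewrite pnatr_eq0 -lt0n big_seq prodn_cond_gt0 // => x _; apply: tran_gt0.
rewrite big_cons natrM -(bin_fact an) !natrM -mulr_natl.
by field; rewrite tc0 tp0.
Qed.

Lemma FL k : TLk k -> forall m (S : L) (X : seq (seq ptree)), uniq X ->
  (forall cs, cs \in X -> [&& size cs == m, all (dep k.+1) cs & sumn (map nleaves cs) == #|S|]) ->
  \sum_(cs <- X) (#|S|)`!%:R / (\prod_(c <- cs) tran c)%:R <= (Fo k S m)%:R :> R.
Proof.
move=> hTL; elim=> [|m IH] S X uX hX /=.
  have hX0 cs : cs \in X -> cs = [::] by move=> /hX /and3P[/eqP/size0nil].
  case: X uX hX hX0 => [|cs X'] uX hX hX0; first by rewrite big_nil ler0n.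
  have -> : X' = [::].
    case: X' uX hX hX0 => // c' X'' /= /andP[+ _] _ hX0.
    by rewrite (hX0 cs (mem_head _ _)) (hX0 c') ?inE ?eqxx ?orbT.
  have e := hX0 cs (mem_head _ _); subst cs.
  have /and3P[_ _ /eqP S0] := hX [::] (mem_head _ _).
  rewrite big_seq1 big_nil -S0 /= div1r invr1.
  by move/esym/cards0_eq: S0 => ->; rewrite eqxx.
set n := #|S|.
have hc cs : cs \in X -> cs = head lf cs :: behead cs.
  by move=> /hX /and3P[/eqP + _ _]; case: cs.
pose w (B : L) (c : ptree) : R := (#|B|)`!%:R / (tran c)%:R.
pose v (B : L) (t : seq ptree) : R := (#|S :\: B|)`!%:R / (\prod_(x <- t) tran x)%:R.
rewrite (eq_big_seq (fun cs => \sum_(B : L | (B \subset S) && (B != set0))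
   (if #|B| == nleaves (head lf cs) then w B (head lf cs) * v B (behead cs) else 0))); last first.
  move=> cs csX; rewrite {1}(hc cs csX); apply: key_split.
  by have /and3P[_ _ /eqP] := hX cs csX; rewrite {1}(hc cs csX).
rewrite exchange_big /= natr_sum.
apply: ler_sum => B /andP[BS B0].
rewrite -big_mkcond /= natrM.
set Xf := [seq cs <- X | #|B| == nleaves (head lf cs)].
set Y := [seq (head lf cs, behead cs) | cs <- Xf].
have -> : \sum_(cs <- X | #|B| == nleaves (head lf cs)) w B (head lf cs) * v B (behead cs)
    = \sum_(y <- Y) w B y.1 * v B y.2 by rewrite big_map big_filter.
have uY : uniq Y.
  rewrite map_inj_in_uniq ?filter_uniq // => cs cs'.
  rewrite !mem_filter => /andP[_ csX] /andP[_ cs'X] [e1 e2].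
  by rewrite (hc cs csX) (hc cs' cs'X) e1 e2.
have w0 c : 0 <= w B c by rewrite /w divr_ge0.
have v0 t : 0 <= v B t by rewrite /v divr_ge0.
apply: le_trans (prod_bound uY w0 v0) _.
have memY y : y \in Y -> exists cs, [/\ cs \in X, #|B| = nleaves (head lf cs), y.1 = head lf cs & y.2 = behead cs].
  by move=> /mapP[cs]; rewrite mem_filter => /andP[/eqP e csX] ->; exists cs.
apply: ler_pM; rewrite ?sumr_ge0 //.
  apply: hTL; first exact: undup_uniq.
  move=> t; rewrite mem_undup => /mapP[y /memY[cs [csX e -> _]] ->].
  have /and3P[_ hd _] := hX cs csX; rewrite (hc cs csX) /= in hd.
  by case/andP: hd => -> _; rewrite e eqxx.
apply: IH; first exact: undup_uniq.
move=> t; rewrite mem_undup => /mapP[y /memY[cs [csX e _ ->]] ->].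
have /and3P[/eqP sz hd /eqP sm] := hX cs csX.
rewrite (hc cs csX) /= in sz hd sm.
case/andP: hd => _ ->; rewrite cardSD // e -sm.
move: sz => [->]; rewrite eqxx /=; apply/eqP; lia.
Qed.


Lemma dep1 t : dep 1 t -> t = Node (nseq (nleaves t) lf).
Proof.
case: t => cs; rewrite dep_node => /andP[cs0 hall].
have e : cs = nseq (size cs) lf.
  apply/all_pred1P; apply/allP => c cc; rewrite /= (dep0 (allP hall c cc)) //.
rewrite nleaves_node //; congr Node.
suff -> : sumn (map nleaves cs) = size cs by [].
by rewrite {1}e; elim: (size cs) => //= j ->.
Qed.

Lemma TL0 : TLk 0.
Proof.
move=> S s us hs.
set t0 := Node (nseq #|S| lf).
have ht t : t \in s -> t = t0.
  by move=> /hs /andP[/dep1 + /eqP e]; rewrite e.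
have tr0 : tran t0 = (#|S|)`!.
  rewrite tranE size_nseq; suff -> : \prod_(c <- nseq #|S| lf) tran c = 1%N by rewrite muln1.
  by elim: #|S| => [|j IHj]; rewrite ?big_nil //= big_cons IHj.
rewrite (eq_big_seq (fun _ => 1)); last first.
  move=> t /ht ->; rewrite tr0 divff // pnatr_eq0 -lt0n fact_gt0 //.
have -> : \sum_(t <- s) (1 : R) = (size s)%:R.
  by elim: (s) => [|x s' IH]; rewrite ?big_nil ?big_cons ?IH //= mulrS.
rewrite KPs0 ler_nat.
have : (size s <= size [:: t0])%N.
  apply: uniq_leq_size => // t /ht ->; exact: mem_head.
by [].
Qed.

Definition ch (t : ptree) := let: Node cs := t in cs.

Lemma size_le_sumn cs : (size cs <= sumn (map nleaves cs))%N.
Proof. by elim: cs => //= c cs IH; have := nleaves_gt0 c; lia. Qed.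

Lemma sumPm k (S : L) : (\sum_(j < #|S|.+1) Pm k S j <= #|KPs k.+1 S|)%N.
Proof.
apply: leq_trans (lemmaC k S).
rewrite [X in (_ <= X)%N](partition_big (fun P : {set L} => (inord #|P| : 'I_#|S|.+1)) xpredT) //=.
apply: leq_sum => j _; rewrite /Pm; apply: eq_leq; apply: eq_bigl => P.
have [hP|] := boolP (partition P S); last by [].
have cP : (#|P| <= #|S|)%N.
  rewrite (card_partition hP) -sum1_card; apply: leq_sum => A AP.
  by rewrite card_gt0; apply: (partition_neq0 hP).
rewrite /=; apply/eqP/eqP => [e|<-]; last by rewrite inordK.
by apply: val_inj; rewrite /= -e inordK.
Qed.

Lemma TLS k : TLk k -> TLk k.+1.
Proof.
move=> hTL S s us hs.
set n := #|S|.
have hch t : t \in s -> [/\ t = Node (ch t), ch t != [::], all (dep k.+1) (ch t) &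
      sumn (map nleaves (ch t)) = n].
  move=> ts; have /andP[hd /eqP hn] := hs t ts.
  case: t hd hn ts => cs; rewrite dep_node /= => /andP[cs0 ha] hn _.
  by split => //; rewrite -nleaves_node.
have szn t : t \in s -> (size (ch t) <= n)%N.
  by move=> /hch[_ _ _ <-]; apply: size_le_sumn.
rewrite (eq_big_seq (fun t => ((size (ch t))`!%:R)^-1 *
     (n`!%:R / (\prod_(c <- ch t) tran c)%:R))); last first.
  move=> t /hch[e _ _ _]; rewrite {1}e tranE natrM invfM; ring.
rewrite (partition_big (fun t => (inord (size (ch t)) : 'I_n.+1)) xpredT) //=.
apply: (@le_trans _ _ (\sum_(j < n.+1) (Pm k S j)%:R)); last first.
  by rewrite -natr_sum ler_nat sumPm.
apply: ler_sum => j _.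
have hj t : t \in s -> (inord (size (ch t)) == j) = (size (ch t) == j).
  move=> ts; apply/eqP/eqP => [<-|e]; first by rewrite /= inordK // ltnS szn.
  by apply: val_inj; rewrite /= inordK // ltnS szn.
rewrite big_seq_cond.
rewrite (eq_bigr (fun t => (j`!%:R)^-1 * (n`!%:R / (\prod_(c <- ch t) tran c)%:R))); last first.
  by move=> t /andP[ts]; rewrite hj // => /eqP ->.
rewrite -big_distrr /=.
rewrite (eq_bigl (fun t => (t \in s) && (size (ch t) == j))); last first.
  by move=> t; case: (boolP (t \in s)) => // ts; rewrite hj.
rewrite -big_filter -(big_map ch xpredT (fun cs => n`!%:R / (\prod_(c <- cs) tran c)%:R)).
have fj : (0 < j`!)%N := fact_gt0 j.
apply: (@le_trans _ _ ((j`!%:R)^-1 * (Fo k S j)%:R)).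
  rewrite ler_pM2l ?invr_gt0 ?ltr0n //.
  apply: FL => //.
    rewrite map_inj_in_uniq ?filter_uniq //.
    move=> t t'; rewrite !mem_filter => /andP[/andP[ts _] _] /andP[/andP[t's _] _] e.
    by case/hch: ts => -> _ _ _; case/hch: t's => -> _ _ _; rewrite e.
  move=> cs /mapP[t]; rewrite mem_filter => /andP[/andP[ts /eqP sj] _] ->.
  by case/hch: ts => _ _ -> ->; rewrite sj !eqxx.
rewrite ler_pdivrMl ?ltr0n // -natrM ler_nat; exact: Fo_le.
Qed.

Lemma TLall k : TLk k.
Proof. elim: k => [|k IH]; [exact: TL0 | exact: TLS]. Qed.

End Reals.

Section Fact.
Variable R : realType.

Lemma succ_pow_le (n : nat) : (n.+1%:R : R) ^+ n <= expR 1 * n%:R ^+ n.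
Proof.
case: n => [|n]; first by rewrite !expr0 mulr1; have := expR_ge1Dx (1:R); lra.
have np : (0 : R) < n.+1%:R by rewrite ltr0n.
have -> : (n.+2%:R : R) = n.+1%:R * (1 + n.+1%:R^-1).
  by rewrite mulrDr mulr1 divff ?gt_eqF // -natr1.
rewrite exprMn mulrC ler_pM2r ?exprn_gt0 //.
apply: le_trans (_ : expR (n.+1%:R^-1) ^+ n.+1 <= _).
  apply: lerXn2r; rewrite ?nnegrE ?addr_ge0 ?invr_ge0 ?ler0n ?expR_ge0 //.
  exact: expR_ge1Dx.
by rewrite -expRM_natl divff ?gt_eqF.
Qed.

Lemma pow_le_fact n : (n%:R : R) ^+ n <= expR 1 ^+ n * n`!%:R.
Proof.
elim: n => [|n IH]; first by rewrite !expr0 mul1r.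
rewrite (exprS (n.+1%:R)) factS natrM (exprS (expR 1)).
apply: le_trans (_ : n.+1%:R * (expR 1 * n%:R ^+ n) <= _).
  by rewrite ler_pM2l ?ltr0n // succ_pow_le.
have e0 := expR_gt0 (1:R).
have h1 : (expR 1 : R) * n%:R ^+ n <= expR 1 * (expR 1 ^+ n * n`!%:R).
  by rewrite (ler_pM2l e0).
move: h1.
have : (0:R) <= n.+1%:R by [].
move: (expR 1) (n.+1%:R : R) (n%:R ^+ n : R) (expR 1 ^+ n) (n`!%:R : R) => a b c d f b0 h.
have := ler_wpM2l b0 h; move=> h2; apply: le_trans h2 _; rewrite [X in _ <= X](_ : _ = b * (a * (d * f))) //; ring.
Qed.
End Fact.

Unset Implicit Arguments.
Theorem claim9p3 (R : realType) (C : R) (k p : nat) (s : seq ptree) :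
  0 < C ->
  all (fun t => is_kp_tree k p t && nice C p t) s ->
  pairwise_distinct s ->
  (bk k p)%:R `^ (p%:R^-1) >= p%:R / (expR 1 * C ^+ 2) * (size s)%:R `^ (p%:R^-1).
Proof.
move=> C0 hall hd.
have us : uniq s.
  apply/(uniqP (Node [::])) => i j hi hj e; apply: hd => //.
have hs t : t \in s -> dep k.+1 t && (nleaves t == #|[set: 'I_p]|).
  move=> ts; move/allP: hall => /(_ t ts) /andP[/andP[/eqP e dk] _].
  by rewrite cardsT card_ord /nleaves e eqxx andbT.
have key := @TLall R p k [set: 'I_p] s us hs.
rewrite cardsT card_ord -bkE in key.
have hnice t : t \in s -> (tran t)%:R <= C ^+ p.
  by move=> ts; move/allP: hall => /(_ t ts) /andP[_].
have [p0|pp] := posnP p.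
  have -> : (p%:R : R) = 0 by rewrite p0.
  by rewrite !mul0r powR_ge0.
have pinv0 : (p%:R^-1 : R) != 0 by rewrite invr_eq0 pnatr_eq0 -lt0n.
have [s0|sn] := eqVneq s [::].
  by rewrite s0 /= powR0 // mulr0 powR_ge0.
have [t0 t0s] : exists t, t \in s by case: (s) sn => // t s' _; exists t; rewrite mem_head.
have Cp1 : 1 <= C ^+ p.
  apply: le_trans (hnice t0 t0s); rewrite ler1n; exact: tran_gt0.
have Cp0 : 0 < C ^+ p by apply: lt_le_trans Cp1; rewrite ltr01.
set N : R := (size s)%:R.
set F : R := (p`!)%:R.
set x : R := p%:R / (expR 1 * C ^+ 2).
have F0 : 0 < F by rewrite ltr0n fact_gt0.
have N0 : 0 <= N by rewrite ler0n.
have x0 : 0 <= x by rewrite divr_ge0 ?ler0n // mulr_ge0 ?expR_ge0 // exprn_ge0 // ltW.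
have h1 : N * (F / C ^+ p) <= (bk k p)%:R.
  apply: le_trans key.
  have -> : N * (F / C ^+ p) = \sum_(t <- s) (F / C ^+ p).
    rewrite /N; elim: (s) => [|y s' IH]; rewrite ?big_nil ?mul0r // big_cons -IH /=.
    by rewrite -addn1 natrD mulrDl mul1r addrC.
  rewrite big_seq_cond [X in _ <= X]big_seq_cond; apply: ler_sum => t /andP[ts _].
  rewrite ler_pM2l //.
  rewrite lef_pV2 ?posrE ?ltr0n ?tran_gt0 //; exact: hnice.
have h2 : x ^+ p <= F / C ^+ p.
  have -> : x ^+ p = (p%:R ^+ p / expR 1 ^+ p) / (C ^+ p) ^+ 2.
    by rewrite /x expr_div_n exprMn -!exprM mulnC invfM mulrA.
  have e0 : 0 < expR 1 ^+ p :> R by rewrite exprn_gt0 // expR_gt0.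
  have ha : (p%:R : R) ^+ p / expR 1 ^+ p <= F.
    by rewrite ler_pdivrMr // mulrC; apply: pow_le_fact.
  have ha0 : 0 <= (p%:R : R) ^+ p / expR 1 ^+ p by apply: divr_ge0; [apply: exprn_ge0; apply: ler0n | exact: ltW].
  apply: le_trans (_ : (p%:R : R) ^+ p / expR 1 ^+ p / C ^+ p <= _); last first.
    by rewrite ler_pM2r ?invr_gt0.
  rewrite ler_pM2l ?lef_pV2 ?posrE ?exprn_gt0 //.
    by rewrite expr2; apply: ler_peMl => //; apply: ltW.
  by apply: divr_gt0 => //; apply: exprn_gt0; rewrite ltr0n.
have h3 : N * x ^+ p <= (bk k p)%:R.
  by apply: le_trans h1; rewrite ler_wpM2l.
have pi0 : (0 : R) <= p%:R^-1 by rewrite invr_ge0 ler0n.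
have := ge0_ler_powR pi0 _ _ h3.
rewrite !nnegrE ler0n mulr_ge0 ?exprn_ge0 // => /(_ isT isT).
apply: le_trans; rewrite powRM ?exprn_ge0 // mulrC le_eqVlt; apply/predU1P; left; congr (_ * _).
rewrite -powR_mulrn // -powRrM divff ?powRr1 //.
by rewrite pnatr_eq0 -lt0n.
Qed.
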